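(* Let $h:(\mathbb{R}^n,0)\to(\mathbb{R}^n,0)$ be a bi-Lipschitz homeomorphism germ such that $h$ (and hence $h^{-1}$) satisfies condition semiline-(SSP). Let $\overline{h}:S^{n-1}\to S^{n-1}$ be the induced map $\overline{h}(a)=\lim_{t\to0^+}h(ta)/\|h(ta)\|$. Then $\overline{h}$ extends to a bi-Lipschitz homeomorphism $\overline{h}:\mathbb{R}^n\to\mathbb{R}^n$, and for every set-germ $A\subset\mathbb{R}^n$ at $0$ with $0\in\overline{A}$ we have $\overline{h}(D(A))=D(h(LD(A)))=D(h(A))$. In particular $\dim D(A)=\dim D(h(A))$.
   Context: For a set-germ $A\subset\mathbb{R}^n$ at $0$ with $0\in\overline A$, the direction set is $D(A)=\{a\in S^{n-1}:\exists\, x_i\in A\setminus\{0\},\ x_i\to0,\ x_i/\|x_i\|\to a\}$, and $LD(A)=\{ta: a\in D(A),\ t\ge0\}$ is its real tangent cone. A semiline is a set $\{ta:t\ge0\}$ with $a\in S^{n-1}$. A homeomorphism germ $h$ satisfies condition semiline-(SSP) if for every semiline $\ell$, $D(h(\ell))$ is a single point; under this hypothesis the limit defining $\overline h(a)$ exists and equals the unique element of $D(h(\{ta:t\ge0\}))$. A bi-Lipschitz homeomorphism germ is a homeomorphism germ $h$ with $h(0)=0$ and constants $0<K_1\le K_2$ with $K_1\|x-y\|\le\|h(x)-h(y)\|\le K_2\|x-y\|$ near $0$. *)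

(* Defs.v *)
From HB Require Import structures.
From mathcomp Require Import all_boot all_order all_algebra.
From mathcomp Require Import all_classical all_reals all_analysis.
Set Implicit Arguments. Unset Strict Implicit. Unset Printing Implicit Defensive.
Import Order.TTheory GRing.Theory Num.Theory.
Import numFieldNormedType.Exports.
Local Open Scope classical_set_scope.
Local Open Scope ring_scope.

Section Defs.
Variables (R : realType) (n : nat).
Local Notation V := 'rV[R]_n.

(** Euclidean norm on R^n (the default normed-module norm on 'rV is the max norm). *)
Definition enorm (x : V) : R := Num.sqrt (\sum_(i < n) x ord0 i ^+ 2).

Definition sphere : set V := [set a | enorm a = 1].
Definition eball0 (r : R) : set V := [set x | enorm x < r].

Definition dir_set (A : set V) : set V :=
  [set a | a \in sphere /\
     exists u : nat -> V, (forall k, A (u k) /\ u k != 0) /\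
       u @ \oo --> (0 : V) /\
       (fun k => (enorm (u k))^-1 *: u k) @ \oo --> a].

Definition LD (A : set V) : set V := [set x | exists t : R, exists2 a, dir_set A a & 0 <= t /\ x = t *: a].

Definition semiline (a : V) : set V := [set x | exists2 t : R, 0 <= t & x = t *: a].

Definition bilipschitz_on (U : set V) (h : V -> V) :=
  exists K1 K2 : R, [/\ 0 < K1, K1 <= K2 &
    forall x y, U x -> U y ->
      K1 * enorm (x - y) <= enorm (h x - h y) /\ enorm (h x - h y) <= K2 * enorm (x - y)].

Definition hbar (h : V -> V) (a : V) : V :=
  lim ((fun t : R => (enorm (h (t *: a)))^-1 *: h (t *: a)) @ 0^'+).

Definition ediam (E : set V) : \bar R :=
  ereal_sup [set z | exists x y, [/\ E x, E y & z = (enorm (x - y))%:E]].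

Definition hcover_term (s : R) (U : set V) : \bar R :=
  if pselect (U = set0) then 0%E else ((fine (ediam U)) `^ s)%:E.

Definition hausdorff_pre (s d : R) (E : set V) : \bar R :=
  ereal_inf [set (\sum_(0 <= k <oo) hcover_term s (U k))%E
            | U in [set U : nat -> set V |
                     E `<=` \bigcup_k U k /\ forall k, (ediam (U k) <= d%:E)%E]].

Definition hausdorff_measure (s : R) (E : set V) : \bar R :=
  ereal_sup [set hausdorff_pre s d E | d in [set d : R | 0 < d]].

Definition hausdorff_dim (E : set V) : \bar R :=
  ereal_inf [set s%:E | s in [set s : R | 0 <= s /\ hausdorff_measure s E = 0%E]].

End Defs.

Arguments sphere {R n}.
Arguments eball0 {R n}.

(* Main.v *)
Require Import Defs.
From HB Require Import structures.
From mathcomp Require Import all_boot all_order all_algebra.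
From mathcomp Require Import all_classical all_reals all_analysis.
Import Order.TTheory GRing.Theory Num.Theory.
Import numFieldNormedType.Exports.
Local Open Scope classical_set_scope.
Local Open Scope ring_scope.
From mathcomp Require Import ring lra.
Set Implicit Arguments. Unset Strict Implicit. Unset Printing Implicit Defensive.

Section Eucl.
Variables (R : realType) (n : nat).
Local Notation V := 'rV[R]_n.
Local Notation en := (@enorm R n).
Implicit Types x y : V.

Definition sq (x : V) : R := \sum_(i < n) x ord0 i ^+ 2.

Lemma sq_ge0 x : 0 <= sq x.
Proof. by apply: sumr_ge0 => i _; rewrite sqr_ge0. Qed.

Lemma enormE x : en x = Num.sqrt (sq x). Proof. by []. Qed.

Lemma enorm_ge0 x : 0 <= en x.
Proof. exact: sqrtr_ge0. Qed.

Lemma enorm_sq x : en x ^+ 2 = sq x.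
Proof. by rewrite enormE sqr_sqrtr // sq_ge0. Qed.

Lemma enorm0 : en 0 = 0.
Proof. by rewrite enormE /sq big1 ?sqrtr0 // => i _; rewrite mxE expr0n. Qed.

Lemma sq_eq0 x : sq x = 0 -> x = 0.
Proof.
move=> H; apply/rowP => i; rewrite !mxE.
have /eqP := @psumr_eq0P _ _ predT (fun i => x ord0 i ^+ 2) (fun i _ => sqr_ge0 (x ord0 i)) H i isT.
by rewrite sqrf_eq0 => /eqP.
Qed.

Lemma enorm_eq0 x : en x = 0 -> x = 0.
Proof.
move=> H; apply: sq_eq0; by rewrite -enorm_sq H expr0n.
Qed.

Lemma enorm_gt0 x : x != 0 -> 0 < en x.
Proof.
move=> x0; rewrite lt_neqAle enorm_ge0 andbT; apply/eqP => H.
by move/eqP: x0; apply; apply: enorm_eq0.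
Qed.

Lemma enormZ (t : R) x : en (t *: x) = `|t| * en x.
Proof.
rewrite !enormE /sq (eq_bigr (fun i => t ^+ 2 * x ord0 i ^+ 2)).
  by rewrite -mulr_sumr sqrtrM ?sqr_ge0 // sqrtr_sqr.
by move=> i _; rewrite mxE exprMn.
Qed.

Lemma enormN x : en (- x) = en x.
Proof. by rewrite -scaleN1r enormZ normrN normr1 mul1r. Qed.

Lemma enormB x y : en (x - y) = en (y - x).
Proof. by rewrite -enormN opprB. Qed.

Lemma coord_le x i : `|x ord0 i| <= en x.
Proof.
rewrite -sqrtr_sqr enormE ler_wsqrtr // /sq (bigD1 i) //= lerDl.
by apply: sumr_ge0 => j _; rewrite sqr_ge0.
Qed.

Lemma CS (a b : 'I_n -> R) :
  \sum_i a i * b i <= Num.sqrt (\sum_i a i ^+ 2) * Num.sqrt (\sum_i b i ^+ 2).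
Proof.
set A := \sum_i a i ^+ 2; set B := \sum_i b i ^+ 2.
have A0 : 0 <= A by apply: sumr_ge0 => i _; rewrite sqr_ge0.
have B0 : 0 <= B by apply: sumr_ge0 => i _; rewrite sqr_ge0.
have [Az|Anz] := eqVneq A 0.
  rewrite big1 ?Az ?sqrtr0 ?mul0r // => i _.
  have /eqP := @psumr_eq0P _ _ predT (fun i => a i ^+ 2) (fun i _ => sqr_ge0 (a i)) Az i isT.
  by rewrite sqrf_eq0 => /eqP ->; rewrite mul0r.
have [Bz|Bnz] := eqVneq B 0.
  rewrite Bz sqrtr0 mulr0 big1 // => i _.
  have /eqP := @psumr_eq0P _ _ predT (fun i => b i ^+ 2) (fun i _ => sqr_ge0 (b i)) Bz i isT.
  by rewrite sqrf_eq0 => /eqP ->; rewrite mulr0.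
set al := Num.sqrt A; set be := Num.sqrt B.
have al0 : 0 < al by rewrite sqrtr_gt0 lt_neqAle eq_sym Anz A0.
have be0 : 0 < be by rewrite sqrtr_gt0 lt_neqAle eq_sym Bnz B0.
have alA : al ^+ 2 = A by rewrite sqr_sqrtr.
have beB : be ^+ 2 = B by rewrite sqr_sqrtr.
have key : 2 * (\sum_i a i * b i) * (al * be) <= A * be ^+ 2 + B * al ^+ 2.
  rewrite /A /B !mulr_suml -big_split /= mulr_sumr mulr_suml; apply: ler_sum => i _.
  have := sqr_ge0 (a i * be - b i * al); nra.
rewrite alA beB in key.
have : (\sum_i a i * b i) * (al * be) <= (al * be) * (al * be).
  have e : A * B + B * A = 2 * ((al * be) * (al * be)).
    by rewrite -alA -beB; ring.
  nra.
by rewrite ler_pM2r // mulr_gt0.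
Qed.

Lemma enormD x y : en (x + y) <= en x + en y.
Proof.
rewrite -(@ler_pXn2r _ 2) ?nnegrE ?addr_ge0 ?enorm_ge0 //.
rewrite sqrrD !enorm_sq /sq.
rewrite (eq_bigr (fun i => x ord0 i ^+ 2 + y ord0 i ^+ 2 + 2 * (x ord0 i * y ord0 i))); last first.
  by move=> i _; rewrite mxE; ring.
rewrite !big_split /= -mulr_sumr.
have := CS (fun i => x ord0 i) (fun i => y ord0 i).
rewrite -!/(sq _) -!enormE => h; nra.
Qed.

Lemma enormDB x y : en x - en y <= en (x - y).
Proof. have := enormD (x - y) y; rewrite subrK; lra. Qed.

Lemma enorm_dist x y : `|en x - en y| <= en (x - y).
Proof.
rewrite ler_norml enormDB andbT; have := enormDB y x; rewrite enormB; lra.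
Qed.

Lemma mxnorm_le x : `|x| <= en x.
Proof.
have -> : `|x| = mx_norm x by [].
rewrite mx_normrE; apply: bigmax_le; first exact: enorm_ge0.
by move=> [i j] _ /=; rewrite (ord1 i); apply: coord_le.
Qed.

Lemma coord_le_mx x i : `|x ord0 i| <= `|x|.
Proof.
have -> : `|x| = mx_norm x by [].
rewrite mx_normrE.
exact: (le_bigmax _ (fun ij : 'I_1 * 'I_n => `|x ij.1 ij.2|) (ord0, i)).
Qed.

Lemma enorm_le_mx x : en x <= n%:R * `|x|.
Proof.
have h0 : 0 <= `|x| by [].
rewrite -(@ler_pXn2r _ 2) ?nnegrE ?mulr_ge0 ?enorm_ge0 // enorm_sq /sq.
apply: (@le_trans _ _ (\sum_(i < n) `|x| ^+ 2)).
  apply: ler_sum => i _; rewrite -real_normK ?num_real //.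
  by rewrite lerXn2r ?nnegrE // coord_le_mx.
rewrite sumr_const card_ord exprMn -[leLHS]mulr_natl.
apply: (ler_wpM2r (sqr_ge0 _)).
rewrite expr2 -natrM ler_nat; by case: (n) => // m; rewrite leq_pmulr.
Qed.

Definition nrm (x : V) : V := (en x)^-1 *: x.

Lemma cvgE (T : Type) (F : set_system T) (FF : Filter F) (f : T -> V) (l : V) :
  f @ F --> l <-> forall e, 0 < e -> \forall t \near F, en (f t - l) < e.
Proof.
split => [/cvgrPdist_lt H e e0 | H].
  have n1 : 0 < n%:R + 1 :> R by rewrite ltr_wpDl.
  have e'0 : 0 < e / (n%:R + 1) by rewrite divr_gt0.
  apply: filterS (H _ e'0) => t /= Ht.
  apply: (le_lt_trans (enorm_le_mx _)).
  rewrite distrC in Ht.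
  have Ht' : n%:R * `|f t - l| <= n%:R * (e / (n%:R + 1)).
    by rewrite ler_wpM2l // ltW.
  apply: (le_lt_trans Ht').
  rewrite mulrA ltr_pdivrMr // mulrC ltr_pM2l //.
  by rewrite ltrDl.
apply/cvgrPdist_lt => e e0; apply: filterS (H _ e0) => t Ht.
by rewrite distrC; apply: le_lt_trans (mxnorm_le _) Ht.
Qed.

Lemma nbhs_enorm (c : V) e : 0 < e -> nbhs c [set v | en (v - c) < e].
Proof.
move=> e0; apply: (proj1 (@cvgE _ (nbhs c) _ (fun v : V => v) c) _ e e0); exact: cvg_id.
Qed.

Lemma enorm_cont : continuous en.
Proof.
move=> x; apply/(@cvgrPdist_lt _ _ _ _ (nbhs_filter x)) => e e0.
apply: filterS (nbhs_enorm x e0) => t /= Ht.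
by apply: le_lt_trans (enorm_dist _ _) _; rewrite enormB.
Qed.

Lemma sphere_compact : compact (@sphere R n).
Proof.
apply: bounded_closed_compact.
  have H1 : \forall M \near +oo, (1:R) <= M by apply: nbhs_pinfty_ge; rewrite num_real.
  apply: filterS H1 => M M1 x /= sx.
  by apply: le_trans (mxnorm_le x) _; rewrite /sphere /= in sx; rewrite sx.
rewrite (_ : sphere = en @^-1` [set 1]); last by [].
apply: (proj1 (continuous_closedP _)) enorm_cont _ _.
exact: closed_eq.
Qed.

Lemma cluster_sphere (T : Type) (F : set_system T) (PF : ProperFilter F) (g : T -> V) :
  F (fun t => sphere (g t)) ->
  exists c, sphere c /\ forall e A, 0 < e -> F A -> exists t, A t /\ en (g t - c) < e.
Proof.
move=> Fs.
have [c [sc clc]] := sphere_compact (fmap_proper_filter g PF) Fs.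
exists c; split => // e A e0 FA.
have FA' : (g @ F) (g @` A) by rewrite /fmap /=; apply: filterS FA => t At; exists t.
have [v [[t At <-] Hv]] := clc _ _ FA' (nbhs_enorm c e0).
by exists t.
Qed.

Lemma Dchar (B : set V) c : dir_set B c <->
  sphere c /\ forall e d, 0 < e -> 0 < d ->
    exists w, [/\ B w, w != 0, en w < d & en (nrm w - c) < e].
Proof.
split.
  move=> [sc [u [Bu [u0 uc]]]]; rewrite inE in sc; split => // e d e0 d0.
  have H1 := (proj1 (cvgE eventually_filter _ _)) u0 d d0.
  have H2 := (proj1 (cvgE eventually_filter _ _)) uc e e0.
  have [k [k1 k2]] := filter_ex (filterI H1 H2).
  exists (u k); split => //; [exact: (Bu k).1 | exact: (Bu k).2 | by rewrite subr0 in k1].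
move=> [sc H]; split; first by rewrite inE.
have H' : forall k : nat, exists w, [/\ B w, w != 0, en w < k.+1%:R^-1 & en (nrm w - c) < k.+1%:R^-1].
  by move=> k; apply: H.
have [u Hu] := choice H'.
exists u; split; first by move=> k; have [] := Hu k.
split.
  apply/(cvgE eventually_filter) => e e0; have := near_infty_natSinv_lt (PosNum e0).
  apply: filterS => k /= Hk; rewrite subr0; have [_ _ Hk' _] := Hu k; exact: lt_trans Hk' Hk.
apply/(cvgE eventually_filter) => e e0; have := near_infty_natSinv_lt (PosNum e0).
apply: filterS => k /= Hk; have [_ _ _ Hk'] := Hu k; exact: lt_trans Hk' Hk.
Qed.

End Eucl.

Section Pure.
Variables (R : realType) (n : nat).
Local Notation V := 'rV[R]_n.
Local Notation en := (@enorm R n).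
Implicit Types p q x y a : V.

Lemma nrm0 : nrm (0 : V) = 0.
Proof. by rewrite /nrm scaler0. Qed.

Lemma nrm_sphere p : p != 0 -> sphere (nrm p).
Proof.
move=> p0; rewrite /sphere /= /nrm enormZ ger0_norm ?invr_ge0 ?enorm_ge0 //.
by rewrite mulVf // gt_eqF // enorm_gt0.
Qed.

Lemma nrm_scale (t : R) a : 0 < t -> sphere a -> nrm (t *: a) = a.
Proof.
move=> t0 sa; rewrite /nrm enormZ gtr0_norm // sa mulr1 scalerA mulVf ?scale1r //.
by rewrite gt_eqF.
Qed.

Lemma sphere_neq0 a : sphere a -> a != 0.
Proof. by move=> sa; apply/eqP => a0; move: sa; rewrite /sphere /= a0 enorm0 => /eqP; rewrite eq_sym oner_eq0. Qed.

Lemma enorm_scale_sphere (t : R) a : 0 <= t -> sphere a -> en (t *: a) = t.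
Proof. by move=> t0 sa; rewrite enormZ ger0_norm // sa mulr1. Qed.

Lemma scale_neq0 (t : R) a : 0 < t -> sphere a -> t *: a != 0.
Proof.
move=> t0 sa; apply/eqP => E; have := enorm_scale_sphere (ltW t0) sa.
by rewrite E enorm0 => /eqP; rewrite eq_sym gt_eqF.
Qed.

Lemma nrm_diff p q : p != 0 -> en (nrm p - nrm q) <= 2 * en (p - q) / en p.
Proof.
move=> p0; have P0 := enorm_gt0 p0; set P := en p.
have [->|q0] := eqVneq q 0.
  rewrite nrm0 subr0 subr0; have := nrm_sphere p0; rewrite /sphere /= => ->.
  by rewrite -/P mulfK ?gt_eqF // ler1n.
have Q0 := enorm_gt0 q0; set Q := en q.
have E : P *: (nrm p - nrm q) = (p - q) + (1 - P / Q) *: q.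
  rewrite scalerBr /nrm !scalerA -/P -/Q mulfV ?gt_eqF // scale1r.
  by rewrite scalerBl scale1r mulrC addrA subrK.
have H1 : en (P *: (nrm p - nrm q)) <= 2 * en (p - q).
  rewrite E; apply: le_trans (enormD _ _) _.
  rewrite enormZ -/Q (_ : `|1 - P / Q| * Q = `|Q - P|); last first.
    rewrite -[X in _ * X](gtr0_norm Q0) -normrM mulrBl mul1r -mulrA mulVf ?gt_eqF //.
    by rewrite mulr1.
  have : `|Q - P| <= en (q - p) by apply: enorm_dist.
  rewrite enormB; lra.
move: H1; rewrite enormZ gtr0_norm // => H1.
by rewrite ler_pdivlMr // mulrC.
Qed.

Lemma at_right_ex (P : R -> Prop) :
  (\forall t \near 0^'+, P t) -> exists2 d, 0 < d & forall t, 0 < t < d -> P t.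
Proof.
move=> /nbhs_ballP [d d0 Hd]; exists d => // t /andP[t0 td]; apply: Hd => //.
by rewrite /ball /= sub0r normrN gtr0_norm.
Qed.

Lemma at_right_in (P : R -> Prop) :
  (exists2 d, 0 < d & forall t, 0 < t < d -> P t) -> \forall t \near 0^'+, P t.
Proof.
move=> [d d0 Hd]; apply/nbhs_ballP; exists d => // t /= Ht t0; apply: Hd.
rewrite t0 /=; move: Ht; rewrite /ball /= sub0r normrN gtr0_norm //.
Qed.

Lemma lip_cont (f : R -> R) (K : R) : 0 < K ->
  (forall u v, `|f u - f v| <= K * `|u - v|) -> continuous f.
Proof.
move=> K0 Hf z; apply/(@cvgrPdist_lt _ _ _ _ (nbhs_filter z)) => e e0.
have e'0 : 0 < e / K by rewrite divr_gt0.
have := (proj1 (@cvgrPdist_lt _ _ _ _ (nbhs_filter z) (fun w : R => w) z)) (@cvg_id _ (nbhs z)) _ e'0.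
apply: filterS => w Hy; apply: le_lt_trans (Hf z w) _.
by rewrite -ltr_pdivlMl // mulrC.
Qed.

Lemma tri3 x y (z : V) : en (x - z) <= en (x - y) + en (y - z).
Proof. by have := enormD (x - y) (y - z); rewrite addrA subrK. Qed.

Lemma ray_sep (t t' : R) a a' : sphere a -> sphere a' -> 0 <= t -> 0 <= t' ->
  t * en (a - a') <= 2 * en (t *: a - t' *: a').
Proof.
move=> sa sa' t0 t'0.
have E : t *: a - t *: a' = (t *: a - t' *: a') + (t' - t) *: a' by rewrite scalerBl addrA subrK.
have H1 : en (t *: a - t *: a') <= en (t *: a - t' *: a') + `|t' - t|.
  rewrite E; apply: le_trans (enormD _ _) _; rewrite enormZ sa' mulr1 //.
have H2 : `|t' - t| <= en (t *: a - t' *: a').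
  have := enorm_dist (t *: a) (t' *: a').
  by rewrite (enorm_scale_sphere t0 sa) (enorm_scale_sphere t'0 sa') distrC.
move: H1; rewrite -scalerBr enormZ ger0_norm //; lra.
Qed.

Definition clamp (T u : R) := if u < 0 then 0 else if u < T then u else T.

Lemma clamp_lip T u v : 0 <= T -> `|clamp T u - clamp T v| <= `|u - v|.
Proof.
move=> T0; have n1 : u - v <= `|u - v| := ler_norm _.
have n2 : v - u <= `|u - v| by rewrite distrC ler_norm.
rewrite ler_norml /clamp.
by have [h1|h1] := ltP u 0; have [h2|h2] := ltP v 0; have [h3|h3] := ltP u T;
  have [h4|h4] := ltP v T; apply/andP; split; lra.
Qed.

Lemma clamp_id T u : 0 <= u <= T -> clamp T u = u.
Proof.
move=> /andP[u0 uT]; rewrite /clamp ltNge u0 /=.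
have [//|h] := ltP u T.
by apply/eqP; rewrite eq_le h uT.
Qed.

Lemma clamp_rng T u : 0 <= T -> 0 <= clamp T u <= T.
Proof.
move=> T0; rewrite /clamp; have [h1|h1] := ltP u 0; first by rewrite lexx.
have [h2|h2] := ltP u T; apply/andP; split => //; exact: ltW.
Qed.

Lemma pick3 (a b c : R) : 0 < a -> 0 < b -> 0 < c ->
  exists t, [/\ 0 < t, t < a, t < b & t < c].
Proof.
move=> a0 b0 c0; set m := Num.min a (Num.min b c).
have ma : m <= a by rewrite /m ge_min lexx.
have mb : m <= b by rewrite /m ge_min (ge_min _ b) lexx orbT.
have mc : m <= c by rewrite /m ge_min (ge_min _ b) lexx !orbT.
have m0 : 0 < m by rewrite /m !lt_min a0 b0 c0.
exists (m / 2); split; lra.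
Qed.

Lemma nrmK p : p = en p *: nrm p.
Proof.
have [->|p0] := eqVneq p 0; first by rewrite nrm0 scaler0.
by rewrite /nrm scalerA mulfV ?scale1r // gt_eqF // enorm_gt0.
Qed.

Lemma ar1 (A B C D E F e : R) : A <= B + C -> C <= D + E -> B < e / 2 -> D <= F ->
  E < e / 2 -> A <= F + e.
Proof. lra. Qed.

Lemma ar2 (G P Q S U W e : R) : G <= P -> P <= Q + S -> S <= U + W -> Q < e / 2 ->
  W < e / 2 -> G <= U + e.
Proof. lra. Qed.

Lemma ar3 (A B C e : R) : A <= B + C -> B <= e / 2 -> C < e / 2 -> A < e.
Proof. lra. Qed.

Lemma ar4 (A B C D E F G s e : R) : A <= B + C -> C <= D + E -> B < e / 3 ->
  D <= e / 3 -> E < s -> s < e / 3 -> A <= e.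
Proof. lra. Qed.

End Pure.

Section Main.
Variables (R : realType) (n : nat).
Local Notation V := 'rV[R]_n.
Local Notation en := (@enorm R n).
Implicit Types p q x y a : V.
Variables (h : V -> V) (r K1 K2 : R).
Hypotheses (r0 : 0 < r) (h0 : h 0 = 0) (K10 : 0 < K1) (K12 : K1 <= K2).
Hypothesis hL : forall x y, eball0 r x -> eball0 r y ->
  K1 * en (x - y) <= en (h x - h y) /\ en (h x - h y) <= K2 * en (x - y).
Hypothesis SSP : forall a, sphere a ->
  exists b, dir_set (h @` (semiline a `&` eball0 r)) = [set b].

Lemma K20 : 0 < K2. Proof. exact: lt_le_trans K12. Qed.

Lemma ball0 : eball0 r (0 : V). Proof. by rewrite /eball0 /= enorm0. Qed.

Lemma hlow x : eball0 r x -> K1 * en x <= en (h x).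
Proof. by move=> bx; have [+ _] := hL bx ball0; rewrite h0 !subr0. Qed.

Lemma hup x : eball0 r x -> en (h x) <= K2 * en x.
Proof. by move=> bx; have [_ +] := hL bx ball0; rewrite h0 !subr0. Qed.

Lemma hne0 x : eball0 r x -> x != 0 -> h x != 0.
Proof.
move=> bx x0; apply/eqP => hx0; have := hlow bx; rewrite hx0 enorm0.
by move/(lt_le_trans (mulr_gt0 K10 (enorm_gt0 x0))); rewrite ltxx.
Qed.

Lemma ball_scale (t : R) a : sphere a -> 0 <= t < r -> eball0 r (t *: a).
Proof. by move=> sa /andP[t0 tr]; rewrite /eball0 /= enorm_scale_sphere. Qed.

Definition Na a (t : R) := nrm (h (t *: a)).

Lemma cvg_right (f : R -> V) l :
  (forall e, 0 < e -> exists2 d, 0 < d & forall t, 0 < t < d -> en (f t - l) < e) ->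
  f @ 0^'+ --> l.
Proof.
move=> H; apply/(cvgE (at_right_proper_filter 0)) => e e0.
by apply: at_right_in; apply: H.
Qed.

Lemma Na_lim_b a b : sphere a -> dir_set (h @` (semiline a `&` eball0 r)) = [set b] ->
  forall e, 0 < e -> exists2 d, 0 < d & forall t, 0 < t < d -> en (Na a t - b) < e.
Proof.
move=> sa Hb e e0; apply: at_right_ex; apply: contrapT => Hn.
pose Q := fun t : R => 0 < t /\ ~ (en (Na a t - b) < e).
have PF : ProperFilter (within Q (nbhs (0 : R))).
  apply: within_nbhs_proper => B NB; apply: contrapT => Hemp; apply: Hn.
  rewrite /at_right /within; apply: filterS NB => t Bt t0; apply: contrapT => Hne.
  by apply: Hemp; exists t.
have Hr := num_topology.nbhs0_lt r0.
have Fs : within Q (nbhs (0 : R)) (fun t => sphere (Na a t)).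
  rewrite /within; apply: filterS Hr => t tr [t0 _]; apply: nrm_sphere; apply: hne0.
    by apply: ball_scale => //; rewrite ltW.
  exact: scale_neq0.
have [c [sc Hc]] := cluster_sphere PF Fs.
have cD : dir_set (h @` (semiline a `&` eball0 r)) c.
  apply/Dchar; split => // e' d e'0 d0.
  have dK : 0 < d / K2 by rewrite divr_gt0 // K20.
  have Hd := num_topology.nbhs0_lt dK.
  have FA : within Q (nbhs (0 : R)) [set t | Q t /\ t < r /\ t < d / K2].
    by rewrite /within; apply: filterS (filterI Hr Hd) => t [tr td] Qt.
  have [t [[[t0 _] [tr td]] Ht]] := Hc e' _ e'0 FA.
  have bt : eball0 r (t *: a) by apply: ball_scale => //; rewrite ltW.
  exists (h (t *: a)); split => //.
  - by exists (t *: a) => //; split => //; exists t => //; rewrite ltW.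
  - by apply: hne0 => //; apply: scale_neq0.
  - apply: le_lt_trans (hup bt) _; rewrite enorm_scale_sphere ?ltW //.
    by rewrite -ltr_pdivlMl ?K20 // mulrC.
have cb : c = b by move: cD; rewrite Hb.
have FQ : within Q (nbhs (0 : R)) Q by rewrite /within; apply: filterS Hr => t _.
have [t [[_ Hnt] Ht]] := Hc e Q e0 FQ.
by apply: Hnt; rewrite -cb.
Qed.

Lemma hbar_lim a : sphere a -> sphere (hbar h a) /\
  forall e, 0 < e -> exists2 d, 0 < d & forall t, 0 < t < d -> en (Na a t - hbar h a) < e.
Proof.
move=> sa; have [b Hb] := SSP sa.
have bD : dir_set (h @` (semiline a `&` eball0 r)) b by rewrite Hb.
have sb : sphere b by have [] := (proj1 (Dchar _ _)) bD.
have key := Na_lim_b sa Hb.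
suff -> : hbar h a = b by [].
rewrite /hbar; apply: (cvg_lim (@norm_hausdorff _ _)).
exact: cvg_right.
Qed.

Lemma hbar_sphere a : sphere a -> sphere (hbar h a).
Proof. by move=> sa; have [] := hbar_lim sa. Qed.

Lemma hbar_up a a' : sphere a -> sphere a' ->
  en (hbar h a - hbar h a') <= 2 * K2 / K1 * en (a - a').
Proof.
move=> sa sa'; have [_ L1] := hbar_lim sa; have [_ L2] := hbar_lim sa'.
set b := hbar h a; set b' := hbar h a'; set d := en (a - a').
apply/ler_addgt0Pr => e e0.
have e2 : 0 < e / 2 by rewrite divr_gt0.
have [d1 d10 H1] := L1 _ e2; have [d2 d20 H2] := L2 _ e2.
have [t [t0 td1 td2 tr]] := pick3 d10 d20 r0.
have bt : eball0 r (t *: a) by apply: ball_scale => //; rewrite ltW.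
have bt' : eball0 r (t *: a') by apply: ball_scale => //; rewrite ltW.
have N1 := H1 t (andb_true_intro (conj t0 td1)).
have N2 := H2 t (andb_true_intro (conj t0 td2)).
have key : en (Na a t - Na a' t) <= 2 * K2 / K1 * d.
  have hta0 : h (t *: a) != 0 by apply: hne0 => //; apply: scale_neq0.
  apply: le_trans (nrm_diff _ hta0) _.
  have X1 : en (h (t *: a) - h (t *: a')) <= K2 * (t * d).
    have [_ +] := hL bt bt'; by rewrite -scalerBr enormZ gtr0_norm.
  have Y1 : K1 * t <= en (h (t *: a)).
    by have := hlow bt; rewrite enorm_scale_sphere // ltW.
  have Y0 : 0 < en (h (t *: a)) by apply: enorm_gt0.
  rewrite ler_pdivrMr //.
  have E : 2 * K2 / K1 * d * K1 = 2 * K2 * d by field; rewrite gt_eqF.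
  have c0 : 0 <= 2 * K2 / K1 * d by rewrite mulr_ge0 ?enorm_ge0 // divr_ge0 // ?mulr_ge0 ?ltW ?K20.
  have d0 : 0 <= d by apply: enorm_ge0.
  nra.
have T1 := tri3 b (Na a t) b'; have T2 := tri3 (Na a t) (Na a' t) b'.
rewrite (enormB b (Na a t)) in T1.
exact: (ar1 T1 T2 N1 key N2).
Qed.

Lemma hbar_low a a' : sphere a -> sphere a' ->
  K1 / (2 * K2) * en (a - a') <= en (hbar h a - hbar h a').
Proof.
move=> sa sa'; have [_ L1] := hbar_lim sa; have [_ L2] := hbar_lim sa'.
set b := hbar h a; set b' := hbar h a'; set d := en (a - a').
have K2p := K20.
apply/ler_addgt0Pr => e e0.
have e2 : 0 < e / 2 by rewrite divr_gt0.
have [d1 d10 H1] := L1 _ e2; have [d2 d20 H2] := L2 _ e2.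
have rK : 0 < r * K1 / K2 by rewrite divr_gt0 ?mulr_gt0.
have dK : 0 < d2 * K1 / K2 by rewrite divr_gt0 ?mulr_gt0.
have [t [t0 td1 trK td2K]] := pick3 d10 rK dK.
set T := t * K2 / K1.
have ET : T * K1 = t * K2 by rewrite /T mulfVK // gt_eqF.
have T0 : 0 < T by rewrite /T divr_gt0 ?mulr_gt0.
have Tr : T < r.
  by rewrite /T ltr_pdivrMr // -ltr_pdivlMr // mulrAC.
have Td2 : T < d2.
  by rewrite /T ltr_pdivrMr // -ltr_pdivlMr // mulrAC.
have tT : t <= T by rewrite /T ler_pdivlMr // ler_pM2l.
have tr : t < r by apply: le_lt_trans tT Tr.
have bt : eball0 r (t *: a) by apply: ball_scale => //; rewrite ltW.
pose phi u := en (h (clamp T u *: a')).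
have bc u : eball0 r (clamp T u *: a').
  apply: ball_scale => //; have /andP[c0 cT] := clamp_rng u (ltW T0).
  by rewrite c0 /=; apply: le_lt_trans cT Tr.
have phic : continuous phi.
  apply: (lip_cont K2p) => u v; apply: le_trans (enorm_dist _ _) _.
  have [_ +] := hL (bc u) (bc v); move/le_trans; apply.
  rewrite -scalerBl enormZ sa' mulr1 ler_pM2l //; exact: clamp_lip (ltW T0).
set rho := en (h (t *: a)).
have rhoup : rho <= K1 * T.
  by rewrite mulrC ET mulrC; have := hup bt; rewrite enorm_scale_sphere // ltW.
have rholow : K1 * t <= rho by have := hlow bt; rewrite enorm_scale_sphere // ltW.
have phi0 : phi 0 = 0.
  rewrite /phi clamp_id; first by rewrite scale0r h0 enorm0.
  by rewrite lexx ltW.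
have phiT : K1 * T <= phi T.
  have cTT : clamp T T = T by apply: clamp_id; rewrite lexx ltW.
  by have := hlow (bc T); rewrite /phi cTT enorm_scale_sphere // ltW.
have [t' t'in phit'] : exists2 t', t' \in `[0, T] & phi t' = rho.
  apply: IVT; first exact: ltW.
    exact: continuous_subspaceT.
  rewrite phi0 min_l ?max_r; last 2 first.
  - apply: le_trans phiT; rewrite mulr_ge0 // ltW //.
  - apply: le_trans phiT; rewrite mulr_ge0 // ltW //.
  rewrite enorm_ge0 /=; exact: le_trans phiT.
move: t'in; rewrite in_itv /= => /andP[t'0 t'T].
have ct' : clamp T t' = t' by apply: clamp_id; rewrite t'0.
rewrite /phi ct' in phit'.
have t'p : 0 < t'.
  rewrite lt_neqAle t'0 andbT; apply/eqP => t'e; move: phit'.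
  rewrite -t'e scale0r h0 enorm0 => rho0.
  have : 0 < K1 * t by rewrite mulr_gt0.
  by rewrite -rho0 in rholow; move: rholow => /[swap] /lt_le_trans /[apply]; rewrite ltxx.
have bt' : eball0 r (t' *: a') by apply: ball_scale => //; rewrite t'0 /=; apply: le_lt_trans t'T Tr.
set N := Na a t; set N' := Na a' t'.
have E : h (t *: a) - h (t' *: a') = rho *: (N - N').
  by rewrite scalerBr {1}(nrmK (h (t *: a))) {1}(nrmK (h (t' *: a'))) phit'.
have up : en (h (t *: a) - h (t' *: a')) <= K2 * t * en (N - N').
  rewrite E enormZ ger0_norm ?enorm_ge0 // ler_wpM2r ?enorm_ge0 //.
  by have := hup bt; rewrite enorm_scale_sphere // ltW.
have lo : K1 * (t * d) <= 2 * en (h (t *: a) - h (t' *: a')).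
  have [+ _] := hL bt bt'; have := ray_sep sa sa' (ltW t0) t'0.
  rewrite -/d => r1 r2; have := ler_wpM2l (ltW K10) r1; rewrite mulrA; lra.
have NN : K1 / (2 * K2) * d <= en (N - N').
  rewrite mulrAC ler_pdivrMr ?mulr_gt0 //.
  have : t * (K1 * d) <= t * (en (N - N') * (2 * K2)) by nra.
  by rewrite ler_pM2l.
have N1 := H1 t (andb_true_intro (conj t0 td1)).
have N2 := H2 t' (andb_true_intro (conj t'p (le_lt_trans t'T Td2))).
have T1 := tri3 N b N'; have T2 := tri3 b b' N'.
rewrite (enormB b') -/N' in T2; rewrite -/N in N1.
exact: (ar2 NN T1 T2 N1 N2).
Qed.

Lemma nrm_close x a (eta : R) : sphere a -> x != 0 -> eball0 r x ->
  en (nrm x - a) <= eta -> en (Na a (en x) - nrm (h x)) <= 2 * K2 / K1 * eta.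
Proof.
move=> sa x0 bx Hx; set tau := en x.
have tau0 : 0 < tau by apply: enorm_gt0.
have bta : eball0 r (tau *: a) by apply: ball_scale => //; rewrite ltW //=.
have hta0 : h (tau *: a) != 0 by apply: hne0 => //; apply: scale_neq0.
apply: le_trans (nrm_diff _ hta0) _.
have X1 : en (h (tau *: a) - h x) <= K2 * (tau * eta).
  have [_ +] := hL bta bx; move/le_trans; apply; rewrite ler_pM2l ?K20 //.
  rewrite [X in en (_ - X)](nrmK x) -/tau -scalerBr enormZ gtr0_norm // enormB ler_pM2l //.
have Y1 : K1 * tau <= en (h (tau *: a)).
  by have := hlow bta; rewrite enorm_scale_sphere // ltW.
have Y0 : 0 < en (h (tau *: a)) by apply: enorm_gt0.
have eta0 : 0 <= eta by apply: le_trans Hx; apply: enorm_ge0.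
rewrite ler_pdivrMr //.
have E : 2 * K2 / K1 * eta * K1 = 2 * K2 * eta by field; rewrite gt_eqF.
have c0 : 0 <= 2 * K2 / K1 * eta by rewrite mulr_ge0 // divr_ge0 // ?mulr_ge0 ?ltW ?K20.
nra.
Qed.

Lemma G_sup (B : set V) a : dir_set B a -> dir_set (h @` (B `&` eball0 r)) (hbar h a).
Proof.
move=> /Dchar [sa HB]; have [sb L] := hbar_lim sa.
apply/Dchar; split => // e d e0 d0.
have e2 : 0 < e / 2 by rewrite divr_gt0.
have [t1 t10 Ht] := L _ e2.
have K2p := K20.
have eta0 : 0 < e * K1 / (4 * K2) by rewrite divr_gt0 ?mulr_gt0.
have dK : 0 < d / K2 by rewrite divr_gt0.
have [de [de0 det der dedK]] := pick3 t10 r0 dK.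
have [w [Bw w0 wde wa]] := HB _ _ eta0 de0.
have bw : eball0 r w by apply: lt_trans wde der.
have tau0 : 0 < en w by apply: enorm_gt0.
exists (h w); split.
- by exists w.
- exact: hne0.
- apply: le_lt_trans (hup bw) _; rewrite -ltr_pdivlMl // mulrC.
  exact: lt_trans wde dedK.
- have := nrm_close sa w0 bw (ltW wa).
  have E : 2 * K2 / K1 * (e * K1 / (4 * K2)) = e / 2 by field; rewrite !gt_eqF.
  rewrite E => H1.
  have H2 := Ht (en w) (andb_true_intro (conj tau0 (lt_trans wde det))).
  have T1 := tri3 (nrm (h w)) (Na a (en w)) (hbar h a).
  rewrite (enormB (nrm (h w)) (Na a (en w))) in T1.
  exact: (ar3 T1 H1 H2).
Qed.

Lemma G_sub (B : set V) c : dir_set (h @` (B `&` eball0 r)) c ->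
  exists2 a, dir_set B a & hbar h a = c.
Proof.
move=> /Dchar [sc HC].
have HX : forall s : R, exists x, 0 < s ->
    [/\ B x, eball0 r x, h x != 0, en (h x) < s & en (nrm (h x) - c) < s].
  move=> s; have [s0|s0] := ltP 0 s; last by exists 0 => /=.
  have [w [[x [Bx bx] hxw] w0 ws wc]] := HC _ _ s0 s0.
  exists x => _; rewrite hxw; split => //.
have [X HXs] := choice HX.
have Fs : (0 : R)^'+ (fun s => sphere (nrm (X s))).
  apply: at_right_in; exists 1 => // s /andP[s0 _].
  have [_ bx hx0 _ _] := HXs s s0; apply: nrm_sphere.
  by apply: contraNneq hx0 => ->; rewrite h0.
have [a [sa Hc]] := cluster_sphere (at_right_proper_filter 0) Fs.
have K2p := K20.
have aD : dir_set B a.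
  apply/Dchar; split => // e d e0 d0.
  have Kd : 0 < K1 * d by rewrite mulr_gt0.
  have FA : (0 : R)^'+ [set s | 0 < s < K1 * d] by apply: at_right_in; exists (K1 * d).
  have [s [/andP[s0 sd] Hs]] := Hc e _ e0 FA.
  have [Bx bx hx0 hxs _] := HXs s s0.
  exists (X s); split => //.
  - by apply: contraNneq hx0 => ->; rewrite h0.
  - rewrite -(ltr_pM2l K10); apply: le_lt_trans (hlow bx) _; exact: lt_trans hxs sd.
exists a => //.
have [sb L] := hbar_lim sa.
suff : en (hbar h a - c) <= 0.
  by move=> H; apply/eqP; rewrite -subr_eq0; apply/eqP; apply: enorm_eq0; apply/eqP;
    rewrite eq_le H enorm_ge0.
apply/ler_addgt0Pr => e e0; rewrite add0r.
have e3 : 0 < e / 3 by rewrite divr_gt0.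
have [t1 t10 Ht] := L _ e3.
have eta0 : 0 < e * K1 / (6 * K2) by rewrite divr_gt0 ?mulr_gt0.
have Kt : 0 < K1 * t1 by rewrite mulr_gt0.
have FA : (0 : R)^'+ [set s | 0 < s < Num.min (K1 * t1) (e / 3)].
  by apply: at_right_in; exists (Num.min (K1 * t1) (e / 3)); rewrite ?lt_min ?Kt ?e3.
have [s [/andP[s0 sd] Hs]] := Hc _ _ eta0 FA.
move: sd; rewrite lt_min => /andP[sK se].
have [Bx bx hx0 hxs hxc] := HXs s s0.
have x0 : X s != 0 by apply: contraNneq hx0 => ->; rewrite h0.
have tau0 : 0 < en (X s) by apply: enorm_gt0.
have taut : en (X s) < t1.
  rewrite -(ltr_pM2l K10); apply: le_lt_trans (hlow bx) _; exact: lt_trans hxs sK.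
have H1 := nrm_close sa x0 bx (ltW Hs).
have E : 2 * K2 / K1 * (e * K1 / (6 * K2)) = e / 3 by field; rewrite !gt_eqF.
rewrite E in H1.
have H2 := Ht (en (X s)) (andb_true_intro (conj tau0 taut)).
have T1 := tri3 (hbar h a) (Na a (en (X s))) c.
have T2 := tri3 (Na a (en (X s))) (nrm (h (X s))) c.
rewrite (enormB (hbar h a) (Na a (en (X s)))) in T1.
exact: (ar4 0 0 T1 T2 H2 H1 hxc se).
Qed.

Lemma G_eq (B : set V) : dir_set (h @` (B `&` eball0 r)) = hbar h @` dir_set B.
Proof.
apply/seteqP; split => c.
  by move=> /G_sub [a aD <-]; exists a.
by move=> [a aD <-]; apply: G_sup.
Qed.

End Main.

Lemma D_LD (R : realType) (n : nat) (A : set 'rV[R]_n) : dir_set (LD A) = dir_set A.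
Proof.
apply/seteqP; split => c.
  move=> /Dchar [sc HC]; apply/Dchar; split => // e d e0 d0.
  have e2 : 0 < e / 2 by rewrite divr_gt0.
  have [w [[t [a aD [t0 ->]]] w0 wd wc]] := HC _ _ e2 d0.
  have tp : 0 < t.
    by rewrite lt_neqAle t0 andbT; apply: contraNneq w0 => <-; rewrite scale0r.
  have [sa HA] := (proj1 (Dchar _ _)) aD.
  rewrite nrm_scale // in wc.
  have [w' [Aw' w'0 w'd w'a]] := HA _ _ e2 d0.
  exists w'; split => //.
  have := tri3 (nrm w') a c; lra.
move=> cD; have [sc HA] := (proj1 (Dchar _ _)) cD.
apply/Dchar; split => // e d e0 d0.
have d2 : 0 < d / 2 by rewrite divr_gt0.
exists ((d / 2) *: c); split.
- by exists (d / 2); exists c => //; split => //; rewrite ltW.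
- exact: scale_neq0.
- by rewrite enorm_scale_sphere ?ltW //; lra.
- by rewrite nrm_scale // subrr enorm0.
Qed.

Section Radial.
Variables (R : realType) (n : nat).
Local Notation V := 'rV[R]_n.
Local Notation en := (@enorm R n).
Implicit Types p q x y a : V.
Variables (phi : V -> V) (m M : R).
Hypotheses (m0 : 0 < m) (M0 : 0 <= M).
Hypothesis phiS : forall a, sphere a -> sphere (phi a).
Hypothesis phiL : forall a a', sphere a -> sphere a' ->
  m * en (a - a') <= en (phi a - phi a') /\ en (phi a - phi a') <= M * en (a - a').
Hypothesis phiO : forall b, sphere b -> exists2 a, sphere a & phi a = b.

Definition rad x := en x *: phi (nrm x).

Lemma rad0 : rad 0 = 0. Proof. by rewrite /rad enorm0 scale0r. Qed.

Lemma en_rad x : en (rad x) = en x.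
Proof.
have [->|x0] := eqVneq x 0; first by rewrite rad0.
by rewrite /rad enormZ ger0_norm ?enorm_ge0 // (phiS (nrm_sphere x0)) mulr1.
Qed.

Lemma rad_sphere a : sphere a -> rad a = phi a.
Proof.
move=> sa; rewrite /rad sa scale1r; congr phi.
by rewrite /nrm sa invr1 scale1r.
Qed.

Lemma key_q x y : x != 0 -> y != 0 -> en x * en (nrm x - nrm y) <= 2 * en (x - y).
Proof.
move=> x0 y0.
have E : en x *: (nrm x - nrm y) = (x - y) + (en y - en x) *: nrm y.
  by rewrite scalerBr scalerBl -!nrmK addrA subrK.
have := enormD (x - y) ((en y - en x) *: nrm y).
rewrite -E (enormZ (en x)) (enormZ (en y - en x)) (nrm_sphere y0) mulr1 ger0_norm ?enorm_ge0 //.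
have := enorm_dist y x; rewrite enormB; lra.
Qed.

Lemma diff_dec x y : x != 0 -> y != 0 ->
  rad x - rad y = en x *: (phi (nrm x) - phi (nrm y)) + (en x - en y) *: phi (nrm y).
Proof. by move=> _ _; rewrite /rad scalerBr scalerBl addrA subrK. Qed.

Lemma xy_dec x y : x != 0 -> y != 0 ->
  x - y = en x *: (nrm x - nrm y) + (en x - en y) *: nrm y.
Proof. by move=> _ _; rewrite scalerBr scalerBl -!nrmK addrA subrK. Qed.

Lemma rad_up x y : en (rad x - rad y) <= (2 * M + 1) * en (x - y).
Proof.
have [->|x0] := eqVneq x 0.
  rewrite rad0 !sub0r !enormN en_rad; move: (enorm_ge0 y) => ey; have := mulr_ge0 M0 ey; lra.
have [->|y0] := eqVneq y 0.
  rewrite rad0 !subr0 en_rad; move: (enorm_ge0 x) => ex; have := mulr_ge0 M0 ex; lra.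
rewrite diff_dec //; apply: le_trans (enormD _ _) _.
rewrite !enormZ (phiS (nrm_sphere y0)) mulr1 ger0_norm ?enorm_ge0 //.
have [_ L] := phiL (nrm_sphere x0) (nrm_sphere y0).
have Q := key_q x0 y0.
have P := enorm_dist x y.
have ex0 := enorm_ge0 x.
have : en x * en (phi (nrm x) - phi (nrm y)) <= en x * (M * en (nrm x - nrm y)).
  by rewrite ler_wpM2l.
have := ler_wpM2l M0 Q; lra.
Qed.

Lemma rad_low x y : m / (m + 2) * en (x - y) <= en (rad x - rad y).
Proof.
have m2 : 0 < m + 2.
  by rewrite addr_gt0.
have mm : m / (m + 2) <= 1 by rewrite ler_pdivrMr // mul1r; lra.
have mm0 : 0 <= m / (m + 2) by rewrite divr_ge0 // ltW.
have [->|x0] := eqVneq x 0.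
  rewrite rad0 !sub0r !enormN en_rad; have := enorm_ge0 y; nra.
have [->|y0] := eqVneq y 0.
  rewrite rad0 !subr0 en_rad; have := enorm_ge0 x; nra.
set D := en (rad x - rad y).
set p := `|en x - en y|.
set q := en x * en (nrm x - nrm y).
have pD : p <= D by rewrite /p -(en_rad x) -(en_rad y); apply: enorm_dist.
have mqD : m * q <= D + p.
  have [L _] := phiL (nrm_sphere x0) (nrm_sphere y0).
  have E := diff_dec x0 y0.
  have : en (en x *: (phi (nrm x) - phi (nrm y))) <= D + p.
    have -> : en x *: (phi (nrm x) - phi (nrm y)) =
      (rad x - rad y) - (en x - en y) *: phi (nrm y) by rewrite E addrK.
    apply: le_trans (enormD _ _) _; rewrite enormN enormZ (phiS (nrm_sphere y0)) mulr1.
    by [].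
  rewrite enormZ ger0_norm ?enorm_ge0 // => H.
  have ex0 := enorm_ge0 x.
  have : en x * (m * en (nrm x - nrm y)) <= en x * en (phi (nrm x) - phi (nrm y)).
    by rewrite ler_wpM2l.
  rewrite /q; nra.
have xyqp : en (x - y) <= q + p.
  rewrite (xy_dec x0 y0); apply: le_trans (enormD _ _) _.
  by rewrite (enormZ (en x)) (enormZ (en x - en y)) (nrm_sphere y0) mulr1 ger0_norm ?enorm_ge0.
rewrite mulrAC ler_pdivrMr //.
have := ler_wpM2l (ltW m0) pD; have := ler_wpM2l (ltW m0) xyqp.
rewrite mulrDr; lra.
Qed.

Lemma rad_inj : injective rad.
Proof.
move=> x y E; have := rad_low x y; rewrite E subrr enorm0 => H.
have m2 : 0 < m / (m + 2) by rewrite divr_gt0 // addr_gt0.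
apply/eqP; rewrite -subr_eq0; apply/eqP; apply: enorm_eq0.
apply/eqP; rewrite eq_le enorm_ge0 andbT.
by rewrite -(ler_pM2l m2) mulr0.
Qed.

Lemma rad_surj y : exists x, rad x = y.
Proof.
have [->|y0] := eqVneq y 0; first by exists 0; rewrite rad0.
have [a sa pa] := phiO (nrm_sphere y0).
exists (en y *: a).
have ey := enorm_gt0 y0.
rewrite /rad nrm_scale // enorm_scale_sphere ?ltW // pa.
by rewrite -nrmK.
Qed.

Lemma rad_bij : bijective rad.
Proof.
have [g Hg] := choice rad_surj.
exists g => x; last exact: Hg.
by apply: rad_inj; rewrite Hg.
Qed.

Lemma rad_bilip : bilipschitz_on setT rad.
Proof.
exists (m / (m + 2)), (2 * M + 1); split.
- by rewrite divr_gt0 // addr_gt0.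
- have m2 : 0 < m + 2 by rewrite addr_gt0.
  rewrite ler_pdivrMr //; have := mulr_ge0 M0 (ltW m0).
  have := ltW m0; move: M0; lra.
- by move=> x y _ _; split; [exact: rad_low | exact: rad_up].
Qed.

End Radial.

Section Haus.
Variables (R : realType) (n : nat).
Local Notation V := 'rV[R]_n.
Local Notation en := (@enorm R n).

Lemma term_ge0 s (U : set V) : (0 <= hcover_term s U)%E.
Proof. by rewrite /hcover_term; case: pselect => HU //; rewrite lee_fin powR_ge0. Qed.

Lemma pre_ge0 s d (E : set V) : (0 <= hausdorff_pre s d E)%E.
Proof.
rewrite /hausdorff_pre; apply/ereal_infP => y [U HU Hy]; rewrite -Hy. apply: nneseries_ge0 => k Hk1 Hk2; exact: term_ge0.
Qed.

Lemma meas0_pre s (E : set V) d : 0 < d -> hausdorff_measure s E = 0%E ->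
  hausdorff_pre s d E = 0%E.
Proof.
move=> d0 H; apply/eqP; rewrite eq_le pre_ge0 andbT -H.
by apply: ereal_sup_ubound; exists d.
Qed.

Lemma pre0_meas s (E : set V) : (forall d, 0 < d -> hausdorff_pre s d E = 0%E) ->
  hausdorff_measure s E = 0%E.
Proof.
move=> H; apply/eqP; rewrite eq_le; apply/andP; split.
  by apply/ereal_supP => y [d d0 <-]; rewrite H.
apply: ereal_sup_ge; exists (hausdorff_pre s 1 E); first by exists 1 => //=; rewrite ltr01.
by rewrite H.
Qed.

Lemma ediam_ub (U : set V) x y : U x -> U y -> ((en (x - y))%:E <= ediam U)%E.
Proof. by move=> Ux Uy; apply: ereal_sup_ubound; exists x, y. Qed.

Lemma ediam_ge0 (U : set V) x : U x -> (0 <= ediam U)%E.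
Proof. by move=> Ux; have := ediam_ub Ux Ux; rewrite subrr enorm0. Qed.

Lemma ediam_le (U : set V) (D : R) : (forall x y, U x -> U y -> en (x - y) <= D) ->
  (ediam U <= D%:E)%E.
Proof. by move=> H; apply/ereal_supP => z [x [y [Ux Uy ->]]]; rewrite lee_fin H. Qed.

Lemma ediam_fin (U : set V) x (d : R) : U x -> (ediam U <= d%:E)%E -> ediam U \is a fin_num.
Proof.
move=> Ux Hd; rewrite ge0_fin_numE ?(ediam_ge0 Ux) //.
by apply: le_lt_trans Hd _; rewrite ltey.
Qed.

Section Lip.
Variables (f : V -> V) (K : R).
Hypotheses (K0 : 0 < K) (Hf : forall x y, en (f x - f y) <= K * en (x - y)).

Lemma term_img s (U : set V) (d : R) : 0 <= s -> (ediam U <= d%:E)%E ->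
  (hcover_term s (f @` U) <= (K `^ s)%:E * hcover_term s U)%E.
Proof.
move=> s0 Hd; rewrite /hcover_term.
case: (pselect (U = set0)) => [U0|U0]; case: (pselect (f @` U = set0)) => [fU0|fU0].
- by rewrite mule0.
- by exfalso; apply: fU0; rewrite U0 image_set0.
- by rewrite -EFinM lee_fin mulr_ge0 // powR_ge0.
have [x Ux] : exists x, U x by apply/set0P/eqP.
have Uf := ediam_fin Ux Hd.
have HfU : (ediam (f @` U) <= (K * fine (ediam U))%:E)%E.
  apply: ediam_le => _ _ [x1 U1 <-] [y1 U1' <-].
  apply: le_trans (Hf _ _) _; rewrite ler_pM2l //.
  by rewrite -lee_fin fineK //; apply: ediam_ub.
have fx : (f @` U) (f x) by exists x.
have Ff : ediam (f @` U) \is a fin_num.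
  by apply: ediam_fin fx HfU.
have le1 : fine (ediam (f @` U)) <= K * fine (ediam U).
  by rewrite -lee_fin fineK.
have ge1 : 0 <= fine (ediam (f @` U)).
  by rewrite -lee_fin fineK // (ediam_ge0 fx).
have ge2 : 0 <= fine (ediam U) by rewrite -lee_fin fineK // (ediam_ge0 Ux).
rewrite -EFinM lee_fin -powRM ?(ltW K0) //.
by apply: (ge0_ler_powR s0); rewrite ?nnegrE ?mulr_ge0 ?(ltW K0).
Qed.

Lemma meas_img s (E : set V) : 0 <= s -> hausdorff_measure s E = 0%E ->
  hausdorff_measure s (f @` E) = 0%E.
Proof.
move=> s0 H; apply: pre0_meas => d d0.
apply/eqP; rewrite eq_le pre_ge0 andbT.
apply/lee_addgt0Pr => e e0; rewrite add0e.
set c := K `^ s.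
have c0 : 0 < c by apply: powR_gt0.
have eta0 : 0 < e / c by rewrite divr_gt0.
have dK : 0 < d / K by rewrite divr_gt0.
have H0 := meas0_pre dK H.
have : (hausdorff_pre s (d / K) E < (e / c)%:E)%E by rewrite H0 lte_fin.
move=> /ereal_inf_lt [y [U [cov diam] <-] Hy].
apply: (@le_trans _ _ (\sum_(0 <= k <oo) hcover_term s (f @` U k))%E).
  apply: ereal_inf_lbound; exists (fun k => f @` U k) => //; split.
    move=> _ [x Ex <-]; have [k _ Ukx] := cov x Ex; by exists k => //; exists x.
  move=> k; apply: ediam_le => _ _ [x1 U1 <-] [y1 U1' <-].
  apply: le_trans (Hf _ _) _.
  have : ((en (x1 - y1))%:E <= (d / K)%:E)%E by apply: le_trans (ediam_ub U1 U1') (diam k).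
  rewrite lee_fin => H1; rewrite -ler_pdivlMl //.
  by rewrite mulrC.
apply: (@le_trans _ _ (\sum_(0 <= k <oo) (c%:E * hcover_term s (U k)))%E).
  apply: lee_nneseries => [k Hk1 Hk2|k Hk]; first exact: term_ge0.
  exact: (term_img s0 (diam k)).
rewrite nneseriesZl; last by move=> k _; exact: term_ge0.
have -> : e = c * (e / c) by rewrite mulrC divfK // gt_eqF.
rewrite EFinM; apply: lee_wpmul2l; first by rewrite lee_fin ltW.
exact: ltW.
Qed.

End Lip.

Lemma dim_img (f g : V -> V) (K K' : R) (E : set V) : 0 < K -> 0 < K' ->
  (forall x y, en (f x - f y) <= K * en (x - y)) ->
  (forall x y, en (g x - g y) <= K' * en (x - y)) ->
  (forall x, g (f x) = x) ->
  hausdorff_dim (f @` E) = hausdorff_dim E.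
Proof.
move=> K0 K'0 Hf Hg gf.
rewrite /hausdorff_dim; congr ereal_inf; congr image.
apply/seteqP; split => s /= [s0 Hs]; split => //.
  have := meas_img K'0 Hg s0 Hs.
  have -> // : g @` (f @` E) = E.
  apply/seteqP; split => [_ [_ [x Ex <-] <-]|x Ex]; first by rewrite gf.
  by exists (f x); [exists x | rewrite gf].
have HH := meas_img K0 Hf s0 Hs; exact: HH.
Qed.

End Haus.

Unset Implicit Arguments. Set Strict Implicit.

Theorem theorem2p25 (R : realType) (n : nat) (h : 'rV[R]_n -> 'rV[R]_n) (r : R) :
  0 < r ->
  h 0 = 0 ->
  bilipschitz_on (eball0 r) h ->
  (exists2 s : R, 0 < s & eball0 s `<=` h @` eball0 r) ->
  (forall a : 'rV[R]_n, sphere a ->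
     exists b : 'rV[R]_n, dir_set (h @` (semiline a `&` eball0 r)) = [set b]) ->
  (exists H : 'rV[R]_n -> 'rV[R]_n,
     [/\ bijective H, bilipschitz_on setT H &
         forall a : 'rV[R]_n, sphere a -> H a = hbar h a]) /\
  (forall A : set 'rV[R]_n, closure A 0 ->
     [/\ hbar h @` dir_set A = dir_set (h @` (LD A `&` eball0 r)),
         dir_set (h @` (LD A `&` eball0 r)) = dir_set (h @` (A `&` eball0 r)) &
         hausdorff_dim (dir_set A) = hausdorff_dim (dir_set (h @` (A `&` eball0 r)))]).
Proof.
move=> r0 h0 [K1 [K2 [K10 K12 hL]]] [s s0 hs] SSP.
have K20 : 0 < K2 by apply: lt_le_trans K12.
set phi := hbar h.
have phiS : forall a, sphere a -> sphere (phi a) := hbar_sphere r0 h0 K10 K12 hL SSP.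
set m := K1 / (2 * K2); set M := 2 * K2 / K1.
have m0 : 0 < m by rewrite divr_gt0 // mulr_gt0.
have M0 : 0 <= M by rewrite divr_ge0 ?mulr_ge0 // ltW.
have phiL : forall a a', sphere a -> sphere a' ->
    m * enorm (a - a') <= enorm (phi a - phi a') /\ enorm (phi a - phi a') <= M * enorm (a - a').
  move=> a a' sa sa'; split.
    exact: (hbar_low r0 h0 K10 K12 hL SSP sa sa').
  exact: (hbar_up r0 h0 K10 K12 hL SSP sa sa').
have phiO : forall b, sphere b -> exists2 a, sphere a & phi a = b.
  move=> b sb.
  have bD : dir_set (h @` (setT `&` eball0 r)) b.
    apply/Dchar; split => // e d e0 d0.
    have [t [t0 ts td _]] := pick3 s0 d0 ltr01.
    have : eball0 s (t *: b) by rewrite /eball0 /= enorm_scale_sphere // ltW.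
    move=> /hs [x bx hx].
    exists (t *: b); split.
    - by exists x.
    - exact: scale_neq0.
    - by rewrite enorm_scale_sphere // ltW.
    - by rewrite nrm_scale // subrr enorm0.
  have [a aD pa] := G_sub r0 h0 K10 K12 hL SSP bD.
  exists a => //; by have [] := (proj1 (Dchar _ _)) aD.
set H := rad phi.
have Hbij : bijective H := rad_bij m0 phiS phiL phiO.
have Hbl : bilipschitz_on setT H := rad_bilip m0 M0 phiS phiL.
have Hs : forall a, sphere a -> H a = phi a by move=> a sa; exact: rad_sphere.
split; first by exists H; split.
move=> A _.
have E1 := G_eq r0 h0 K10 K12 hL SSP (LD A).
have E2 := G_eq r0 h0 K10 K12 hL SSP A.
rewrite D_LD in E1.
split.
- by rewrite E1.
- by rewrite E1 E2.
- rewrite E2.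
  have -> : phi @` dir_set A = H @` dir_set A.
    apply/seteqP; split => _ [a aD <-]; exists a => //;
      by rewrite Hs //; have [] := (proj1 (Dchar _ _)) aD.
  have [g Hg gH] := Hbij.
  have k0 : 0 < m / (m + 2) by rewrite divr_gt0 // addr_gt0.
  symmetry; apply: (@dim_img _ _ H g (2 * M + 1) (m / (m + 2))^-1).
  - by rewrite ltr_wpDl // mulr_ge0.
  - by rewrite invr_gt0.
  - exact: rad_up M0 phiS phiL.
  - move=> x y; rewrite -(ler_pM2l k0) mulrA mulfV ?gt_eqF // mul1r.
    have := rad_low m0 phiS phiL (g x) (g y).
    by rewrite -/H !gH.
  - exact: Hg.
Qed.
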